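(* Let $N\ge 6$ with $N\equiv 2\pmod 4$. Then for every $k$ with $1\le k<N/4$, $$\mathrm{scale}_{N/2}[k]=\mathrm{scale}_N[2k]\,\frac{\mathrm{GenScale}[N/2]}{\mathrm{GenScale}[N]}.$$ Consequently $\mathrm{scale}_N[N/2-2]=\mathrm{GenScale}[N/2]$.
   Context: For an integer $n\ge3$ and $1\le k<n/2$, $\mathrm{scale}_n[k]=\tan(\pi/n)/\tan(k\pi/n)$. $\langle n/2\rangle$ is the greatest integer strictly less than $n/2$ and $\mathrm{GenScale}[n]=\mathrm{scale}_n[\langle n/2\rangle]$. *)

(* Defs.v *)
From Stdlib Require Import Reals Arith Lia.
Open Scope R_scope.

(* scale_n[k] = tan(pi/n) / tan(k pi/n); meaningful for 1 <= k < n/2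
   (the statement only uses it in that range). *)
Definition scale (n k : nat) : R :=
  tan (PI / INR n) / tan (INR k * PI / INR n).

(* <n/2> = greatest integer strictly less than n/2 = (n-1)/2 (floor), n >= 1 *)
Definition half_lt (n : nat) : nat := ((n - 1) / 2)%nat.

Definition GenScale (n : nat) : R := scale n (half_lt n).

(* Main.v *)
Require Import Defs.
From Stdlib Require Import Reals Arith Lia Lra.
Open Scope R_scope.

Lemma tan_cot x : 0 < x -> x < PI/2 -> tan (PI/2 - x) = / tan x.
Proof.
  intros h1 h2. unfold tan. rewrite sin_shift, cos_shift.
  assert (0 < sin x) by (apply sin_gt_0; lra).
  assert (0 < cos x) by (apply cos_gt_0; lra).
  field; split; lra.
Qed.

Theorem lemma6 (N : nat) :
  (6 <= N)%nat -> (N mod 4 = 2)%nat ->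
  (forall k : nat, (1 <= k)%nat -> (4 * k < N)%nat ->
     scale (N / 2) k = scale N (2 * k) * (GenScale (N / 2) / GenScale N))
  /\ scale N (N / 2 - 2) = GenScale (N / 2).
Proof.
  intros H6 Hm.
  assert (HN : N = (4 * (N/4) + 2)%nat) by (pose proof (Nat.div_mod N 4 ltac:(lia)); lia).
  set (m := (N / 4)%nat) in *. clearbody m.
  assert (HM : (N / 2 = 2 * m + 1)%nat) by (symmetry; apply (Nat.div_unique _ _ _ 0); lia).
  assert (Hm1 : (1 <= m)%nat) by lia.
  assert (HhM : half_lt (2*m+1) = m) by (unfold half_lt; symmetry; apply (Nat.div_unique _ _ _ 0); lia).
  assert (HhN : half_lt N = (2*m)%nat) by (unfold half_lt; symmetry; apply (Nat.div_unique _ _ _ 1); lia).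
  unfold GenScale. rewrite HM, HhM, HhN. unfold scale.
  assert (Hmr : 1 <= INR m) by (apply (le_INR 1); lia).
  set (a := PI / INR N).
  assert (HNr : INR N = 4 * INR m + 2) by (rewrite HN, plus_INR, mult_INR; simpl; lra).
  assert (HMr : INR (2*m+1) = 2 * INR m + 1) by (rewrite plus_INR, mult_INR; simpl; lra).
  assert (HPI : PI = INR N * a) by (unfold a; field; lra).
  assert (Ha : 0 < a) by (unfold a; apply Rdiv_lt_0_compat; [apply PI_RGT_0|lra]).
  assert (E1 : forall j, INR j * PI / INR N = INR j * a) by (intro; unfold a; field; lra).
  assert (E2 : forall j, INR j * PI / INR (2*m+1) = 2 * INR j * a)
    by (intro; rewrite HPI, HMr, HNr; field; lra).
  assert (E3 : PI / INR (2*m+1) = 2 * a) by (rewrite HPI, HMr, HNr; field; lra).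
  assert (Hpos : forall y, 0 < y -> y < PI/2 -> tan y <> 0)
    by (intros y h1 h2; pose proof (tan_gt_0 y h1 h2); lra).
  assert (HPI2 : PI / 2 = (2 * INR m + 1) * a) by (rewrite HPI, HNr; field).
  rewrite E3. change (PI / INR N) with a.
  assert (I2 : INR 2 = 2) by (simpl; ring).
  rewrite (E1 (2*m)%nat), (E2 m), (mult_INR 2 m), I2.
  split.
  - intros k hk1 hk2.
    assert (Hk1 : 1 <= INR k) by (apply (le_INR 1); lia).
    assert (Hk2 : 4 * INR k + 1 <= INR N).
    { assert (h : (4*k+1 <= N)%nat) by lia. apply le_INR in h.
      rewrite plus_INR, mult_INR in h. simpl in h. lra. }
    rewrite (E2 k), (E1 (2*k)%nat), (mult_INR 2 k), I2.
    assert (tan a <> 0) by (apply Hpos; nra).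
    assert (tan (2*a) <> 0) by (apply Hpos; nra).
    assert (tan (2*INR k*a) <> 0) by (apply Hpos; nra).
    assert (tan (2*INR m*a) <> 0) by (apply Hpos; nra).
    field; repeat split; auto.
  - rewrite E1, minus_INR by lia. rewrite plus_INR, (mult_INR 2 m), I2. simpl (INR 1).
    replace ((2 * INR m + 1 - 2) * a) with (PI/2 - 2*a) by lra.
    replace (2 * INR m * a) with (PI/2 - a) by lra.
    rewrite !tan_cot by nra.
    assert (0 < tan a) by (apply tan_gt_0; nra).
    assert (0 < tan (2*a)) by (apply tan_gt_0; nra).
    field; lra.
Qed.
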